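(* Let $T$ be the weighted shift on $\ell^2$ associated to a bounded complex sequence $(a_j)_{j\ge1}$. If both $T$ and its mean transform $M(T)$ are $2$-isometries, then $T$ is an isometry, and in particular $T=\Delta(T)=M(T)$.
   Context: $\ell^2$ has canonical basis $(e_j)_{j\ge1}$; the weighted shift associated to $(a_j)$ is the operator with $Te_j=a_je_{j+1}$. For $T\in B(H)$ with polar decomposition $T=V|T|$ ($|T|=(T^*T)^{1/2}$, $V$ the partial isometry with $\ker V=\ker T$), the Aluthge transform is $\Delta(T)=|T|^{1/2}V|T|^{1/2}$ and the mean transform is $M(T)=\frac12(|T|V+V|T|)$. $T$ is a $2$-isometry if $\|x\|^2-2\|Tx\|^2+\|T^2x\|^2=0$ for all $x\in H$. *)

(* Defs.v *)
From Stdlib Require Import Reals.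
From Coquelicot Require Import Coquelicot.
Open Scope R_scope.

(* Vectors of l^2 are complex sequences x : nat -> C (index 0 corresponds to
   the paper's index 1) that are square-summable. *)
Definition seqC := nat -> C.
Definition vzero : seqC := fun _ => 0%C.

Definition l2 (x : seqC) : Prop := ex_series (fun n => (Cmod (x n)) ^ 2).

Definition norm2 (x : seqC) : R := Series (fun n => (Cmod (x n)) ^ 2).

(* <x, y> = sum_n x_n * conj(y_n)  (converges absolutely on l^2) *)
Definition inner (x y : seqC) : C :=
  (Series (fun n => Re (x n * Cconj (y n))%C),
   Series (fun n => Im (x n * Cconj (y n))%C)).

(* Operators are maps on sequences; only their behaviour on l^2 matters. *)
Definition op := seqC -> seqC.

Definition bounded_op (A : op) : Prop :=
  (forall x, l2 x -> l2 (A x)) /\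
  (forall x y (c : C), l2 x -> l2 y ->
     A (fun n => (x n + c * y n)%C) = (fun n => (A x n + c * A y n)%C)) /\
  (exists M : R, forall x, l2 x -> norm2 (A x) <= M * norm2 x).

Definition is_adjoint (A S : op) : Prop :=
  bounded_op S /\ forall x y, l2 x -> l2 y -> inner (A x) y = inner x (S y).

Definition positive_op (P : op) : Prop :=
  bounded_op P /\
  forall x, l2 x -> 0 <= Re (inner (P x) x) /\ Im (inner (P x) x) = 0.

Definition is_sqrt (P Q : op) : Prop :=
  positive_op Q /\ forall x, l2 x -> Q (Q x) = P x.

Definition is_modulus (T P : op) : Prop :=
  positive_op P /\
  forall S, is_adjoint T S -> forall x, l2 x -> P (P x) = S (T x).

Definition partial_isometry (V : op) : Prop :=
  bounded_op V /\
  forall x, l2 x -> (forall y, l2 y -> V y = vzero -> inner x y = 0%C) ->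
    norm2 (V x) = norm2 x.

Definition polar_decomposition (T P V : op) : Prop :=
  is_modulus T P /\ partial_isometry V /\
  (forall x, l2 x -> (V x = vzero <-> T x = vzero)) /\
  (forall x, l2 x -> T x = V (P x)).

(* Aluthge transform |T|^{1/2} V |T|^{1/2}, with Q = |T|^{1/2}. *)
Definition aluthge (Q V : op) : op := fun x => Q (V (Q x)).

(* Mean transform (|T| V + V |T|)/2, with P = |T|. *)
Definition mean_transform (P V : op) : op :=
  fun x n => (/ 2 * (P (V x) n + V (P x) n))%C.

Definition two_isometry (A : op) : Prop :=
  forall x, l2 x -> norm2 x - 2 * norm2 (A x) + norm2 (A (A x)) = 0.

Definition isometry (A : op) : Prop :=
  forall x, l2 x -> norm2 (A x) = norm2 x.

Definition wshift (a : nat -> C) : op :=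
  fun x n => match n with O => 0%C | S m => (a m * x m)%C end.

Definition bounded_seq (a : nat -> C) : Prop := exists M : R, forall n, Cmod (a n) <= M.

(* Main.v *)
Require Import Defs.
From Stdlib Require Import Reals.
From Coquelicot Require Import Coquelicot.
From Stdlib Require Import Lra Psatz FunctionalExtensionality.
From Stdlib Require Import Reals Lra Psatz FunctionalExtensionality.
From Coquelicot Require Import Coquelicot.
Open Scope R_scope.

Lemma is_series_zero : is_series (fun _ : nat => 0) 0.
Proof.
  unfold is_series. apply filterlim_ext with (fun _ => 0).
  - intro n. induction n. rewrite sum_O; reflexivity. rewrite sum_Sn, <- IHn. unfold plus; simpl. ring.
  - apply filterlim_const.
Qed.

Lemma is_series_single (f : nat -> R) (k : nat) :
  (forall n, n <> k -> f n = 0) -> is_series f (f k).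
Proof.
  revert f; induction k; intros f Hf.
  - apply is_series_decr_1.
    match goal with |- is_series _ ?l => replace l with 0 by (unfold plus, opp; simpl; ring) end.
    eapply is_series_ext; [|apply is_series_zero].
    intro n; simpl. symmetry; apply Hf; discriminate.
  - apply is_series_decr_1.
    match goal with |- is_series _ ?l => replace l with (f (S k)) by (rewrite (Hf 0%nat) by discriminate; unfold plus, opp; simpl; ring) end.
    apply (IHk (fun j => f (S j))). intros n Hn. apply Hf. intro H; apply Hn; injection H; auto.
Qed.

Lemma Series_single (f : nat -> R) (k : nat) :
  (forall n, n <> k -> f n = 0) -> ex_series f /\ Series f = f k.
Proof.
  intro H; pose proof (is_series_single f k H). split.
  exists (f k); auto. apply is_series_unique; auto.
Qed.

Definition sv (k : nat) (c : C) : seqC := fun n => if Nat.eq_dec n k then c else 0%C.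

Lemma sv_out k c n : n <> k -> sv k c n = 0%C.
Proof. intro H; unfold sv; destruct (Nat.eq_dec n k); congruence. Qed.
Lemma sv_in k c : sv k c k = c.
Proof. unfold sv; destruct (Nat.eq_dec k k); congruence. Qed.

Lemma l2_sv k c : l2 (sv k c).
Proof.
  unfold l2. apply (Series_single _ k). intros n Hn. rewrite sv_out by auto.
  rewrite Cmod_0; ring.
Qed.

Lemma norm2_sv k c : norm2 (sv k c) = Cmod c ^ 2.
Proof.
  unfold norm2. rewrite (proj2 (Series_single (fun n => Cmod (sv k c n) ^ 2) k
     (fun n Hn => ltac:(cbv beta; rewrite sv_out by auto; rewrite Cmod_0; ring)))).
  rewrite sv_in; auto.
Qed.

Lemma l2_zero : l2 vzero.
Proof. unfold l2, vzero. exists 0. eapply is_series_ext; [|apply is_series_zero].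
  intro; simpl. rewrite Cmod_0; ring. Qed.

Lemma lin_zero (A : op) : bounded_op A -> A vzero = vzero.
Proof.
  intros [_ [Hl _]]. pose proof (Hl vzero vzero 1%C l2_zero l2_zero) as H.
  replace (fun n => (vzero n + 1 * vzero n)%C) with vzero in H
    by (apply functional_extensionality; intro; unfold vzero; ring).
  apply functional_extensionality; intro n. pose proof (f_equal (fun f => f n) H) as H1.
  simpl in H1. unfold vzero at 2. 
  apply (f_equal (fun z => z - A vzero n)%C) in H1. ring_simplify in H1.
  rewrite <- H1. ring.
Qed.

Lemma lin_scal (A : op) y c : bounded_op A -> l2 y ->
  A (fun n => (c * y n)%C) = (fun n => (c * A y n)%C).
Proof.
  intros HA Hy. pose proof HA as [_ [Hl _]]. pose proof (Hl vzero y c l2_zero Hy) as H.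
  replace (fun n => (vzero n + c * y n)%C) with (fun n => (c * y n)%C) in H
    by (apply functional_extensionality; intro; unfold vzero; ring).
  rewrite H, lin_zero by auto. apply functional_extensionality; intro; unfold vzero; ring.
Qed.

Lemma sv_scal k c : sv k c = (fun n => (c * sv k 1 n)%C).
Proof. apply functional_extensionality; intro n; unfold sv; destruct (Nat.eq_dec n k); ring. Qed.

Lemma lin_sv (A : op) k c : bounded_op A -> A (sv k c) = (fun n => (c * A (sv k 1) n)%C).
Proof. intro HA. rewrite sv_scal. apply lin_scal; auto. apply l2_sv. Qed.

Lemma T_sv a k c : wshift a (sv k c) = sv (S k) (a k * c)%C.
Proof.
  apply functional_extensionality; intro n. destruct n; simpl.
  - unfold sv. destruct (Nat.eq_dec 0 (S k)); [discriminate|auto].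
  - unfold sv. destruct (Nat.eq_dec n k), (Nat.eq_dec (S n) (S k)); try lia; subst; ring.
Qed.

From Stdlib Require Import Reals Lra Psatz FunctionalExtensionality.
From Coquelicot Require Import Coquelicot.
Open Scope R_scope.

Lemma ex_series_lin2 (f g : nat -> R) A B : ex_series f -> ex_series g ->
  ex_series (fun n => A * f n + B * g n).
Proof.
  intros Hf Hg. apply (ex_series_scal_l A) in Hf. apply (ex_series_scal_l B) in Hg.
  pose proof (ex_series_plus _ _ Hf Hg) as H. eapply ex_series_ext; [|exact H].
  intro n; reflexivity.
Qed.

Lemma ex_series_bound (f g : nat -> R) : (forall n, Rabs (f n) <= g n) -> ex_series g -> ex_series f.
Proof. intros H Hg. apply (ex_series_le f g); auto. Qed.

Lemma l2_le (u v : seqC) K : (forall n, Cmod (u n) ^ 2 <= K * Cmod (v n) ^ 2) -> l2 v -> l2 u.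
Proof.
  intros H Hv. unfold l2. apply (ex_series_bound _ (fun n => K * Cmod (v n) ^ 2 + 0 * 0)).
  - intro n. rewrite Rabs_pos_eq by (apply pow2_ge_0). rewrite Rmult_0_l, Rplus_0_r. auto.
  - apply (ex_series_lin2 _ (fun _ => 0)); auto. exists 0. apply is_series_zero.
Qed.

Lemma l2_comb x y c : l2 x -> l2 y -> l2 (fun n => (x n + c * y n)%C).
Proof.
  intros Hx Hy. unfold l2.
  apply (ex_series_bound _ (fun n => 2 * (Cmod (x n) ^ 2) + (2 * Cmod c ^ 2) * Cmod (y n) ^ 2)).
  - intro n. rewrite Rabs_pos_eq by (apply pow2_ge_0).
    pose proof (Cmod_triangle (x n) (c * y n)) as T. rewrite Cmod_mult in T.
    pose proof (Cmod_ge_0 (x n + c * y n)%C). pose proof (Cmod_ge_0 (x n)).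
    pose proof (Cmod_ge_0 (y n)). pose proof (Cmod_ge_0 c).
    set (N := Cmod (x n + c * y n)%C) in *. set (X := Cmod (x n)) in *.
    set (Y := Cmod (y n)) in *. set (K := Cmod c) in *.
    assert (N ^ 2 <= (X + K * Y) ^ 2) by nra.
    assert (0 <= (X - K * Y) ^ 2) by apply pow2_ge_0. nra.
  - apply ex_series_lin2; auto.
Qed.

Lemma abs_le_Cmod_im c : Rabs (Im c) <= Cmod c.
Proof.
  rewrite <- (Rabs_pos_eq (Cmod c)) by apply Cmod_ge_0. apply Rsqr_le_abs_0.
  unfold Rsqr. pose proof (Cmod2_alt c). nra.
Qed.

Lemma ex_inner_re u v : l2 u -> l2 v -> ex_series (fun n => Re (u n * Cconj (v n))%C).
Proof.
  intros Hu Hv. apply (ex_series_bound _ (fun n => /2 * Cmod (u n) ^ 2 + /2 * Cmod (v n) ^ 2)).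
  - intro n. eapply Rle_trans; [apply re_le_Cmod|]. rewrite Cmod_mult, Cmod_conj.
    pose proof (Cmod_ge_0 (u n)). pose proof (Cmod_ge_0 (v n)). pose proof (pow2_ge_0 (Cmod (u n) - Cmod (v n))). nra.
  - apply ex_series_lin2; auto.
Qed.

Lemma ex_inner_im u v : l2 u -> l2 v -> ex_series (fun n => Im (u n * Cconj (v n))%C).
Proof.
  intros Hu Hv. apply (ex_series_bound _ (fun n => /2 * Cmod (u n) ^ 2 + /2 * Cmod (v n) ^ 2)).
  - intro n. eapply Rle_trans; [apply abs_le_Cmod_im|]. rewrite Cmod_mult, Cmod_conj.
    pose proof (Cmod_ge_0 (u n)). pose proof (Cmod_ge_0 (v n)). pose proof (pow2_ge_0 (Cmod (u n) - Cmod (v n))). nra.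
  - apply ex_series_lin2; auto.
Qed.

Lemma inner_sv y k : inner y (sv k 1) = y k.
Proof.
  unfold inner.
  rewrite (proj2 (Series_single (fun n => Re (y n * Cconj (sv k 1 n))%C) k
     (fun n Hn => ltac:(cbv beta; rewrite sv_out by auto; simpl; ring)))).
  rewrite (proj2 (Series_single (fun n => Im (y n * Cconj (sv k 1 n))%C) k
     (fun n Hn => ltac:(cbv beta; rewrite sv_out by auto; simpl; ring)))).
  rewrite sv_in. destruct (y k) as [u v]. simpl. f_equal; ring.
Qed.

Definition bshift (a : nat -> C) : op := fun y n => (Cconj (a n) * y (S n))%C.

Lemma l2_T a x : bounded_seq a -> l2 x -> l2 (wshift a x).
Proof.
  intros [M HM] Hx. unfold l2. apply ex_series_incr_1.
  assert (l2 (fun n => wshift a x (S n))).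
  { apply (l2_le _ x (M^2)); auto. intro n; simpl. rewrite Cmod_mult.
    pose proof (HM n). pose proof (Cmod_ge_0 (a n)). pose proof (Cmod_ge_0 (x n)).
    assert (Cmod (a n) ^2 <= M^2) by nra. nra. }
  exact H.
Qed.

Lemma l2_shift y : l2 y -> l2 (fun n => y (S n)).
Proof. intro H; unfold l2 in *. apply ex_series_incr_1 in H. exact H. Qed.

Lemma norm2_shift_le y : l2 y -> norm2 (fun n => y (S n)) <= norm2 y.
Proof.
  intro H. unfold norm2. rewrite (Series_incr_1 (fun n => Cmod (y n) ^ 2)) by auto.
  pose proof (pow2_ge_0 (Cmod (y 0%nat))). lra.
Qed.

Lemma Series_zero : Series (fun _ => 0) = 0.
Proof. apply is_series_unique, is_series_zero. Qed.

Lemma norm2_ge0 y : l2 y -> 0 <= norm2 y.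
Proof.
  intro H. unfold norm2. rewrite <- Series_zero. apply Series_le; auto.
  intro n; split; [lra| apply pow2_ge_0].
Qed.

Lemma norm2_zero y : l2 y -> norm2 y = 0 -> forall n, y n = 0%C.
Proof.
  intros H H0 n. apply Cmod_eq_0.
  assert (Cmod (y n) ^ 2 <= 0).
  { rewrite <- H0. unfold norm2.
    set (g := fun m => if Nat.eq_dec m n then Cmod (y n) ^ 2 else 0).
    assert (Series g = Cmod (y n) ^ 2).
    { assert (Hg : forall m, m <> n -> g m = 0).
      { intros m Hm; unfold g; destruct (Nat.eq_dec m n); [contradiction|reflexivity]. }
      rewrite (proj2 (Series_single g n Hg)). unfold g.
      destruct (Nat.eq_dec n n); congruence. }
    rewrite <- H1. apply Series_le; auto. intro m. unfold g. destruct (Nat.eq_dec m n).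
    subst; split; [apply pow2_ge_0|lra]. split; [lra|apply pow2_ge_0]. }
  pose proof (Cmod_ge_0 (y n)). nra.
Qed.

Lemma bshift_bounded a : bounded_seq a -> bounded_op (bshift a).
Proof.
  intros [M HM]. split; [|split].
  - intros y Hy. apply (l2_le _ (fun n => y (S n)) (M^2)); [|apply l2_shift; auto].
    intro n; unfold bshift. rewrite Cmod_mult, Cmod_conj.
    pose proof (HM n). pose proof (Cmod_ge_0 (a n)). pose proof (Cmod_ge_0 (y (S n))).
    assert (Cmod (a n) ^2 <= M^2) by nra. nra.
  - intros x y c Hx Hy. apply functional_extensionality; intro n; unfold bshift; ring.
  - exists (M^2). intros y Hy. unfold norm2.
    apply Rle_trans with (Series (fun n => M^2 * Cmod (y (S n)) ^ 2)).
    + apply Series_le.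
      * intro n; split; [apply pow2_ge_0|]. unfold bshift. rewrite Cmod_mult, Cmod_conj.
        pose proof (HM n). pose proof (Cmod_ge_0 (a n)). pose proof (Cmod_ge_0 (y (S n))).
        assert (Cmod (a n) ^2 <= M^2) by nra. nra.
      * pose proof (l2_shift y Hy) as H. apply (ex_series_scal_l (M^2)) in H. exact H.
    + rewrite Series_scal_l. apply Rmult_le_compat_l; [apply pow2_ge_0|].
      apply norm2_shift_le; auto.
Qed.

Lemma bshift_adjoint a : bounded_seq a -> is_adjoint (wshift a) (bshift a).
Proof.
  intro Ha. split; [apply bshift_bounded; auto|]. intros x y Hx Hy.
  assert (HT := l2_T a x Ha Hx). unfold inner. f_equal.
  - rewrite (Series_incr_1 _ (ex_inner_re _ _ HT Hy)). simpl.
    match goal with |- ?u + _ = _ => replace u with 0 by (simpl; ring) end.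
    rewrite Rplus_0_l. apply Series_ext; intro n. simpl.
    ring.
  - rewrite (Series_incr_1 _ (ex_inner_im _ _ HT Hy)). simpl.
    match goal with |- ?u + _ = _ => replace u with 0 by (simpl; ring) end.
    rewrite Rplus_0_l. apply Series_ext; intro n. simpl.
    ring.
Qed.

Definition tt (a : nat -> C) (n : nat) : R := Cmod (a n) ^ 2.

Lemma BT a z n : bshift a (wshift a z) n = Cmult (RtoC (tt a n)) (z n).
Proof.
  unfold bshift, tt. change (wshift a z (S n)) with (a n * z n)%C. rewrite Cmod2_conj. ring.
Qed.

From Stdlib Require Import Reals Lra Psatz.
Open Scope R_scope.
Lemma final_ineq x y z : 0 < x -> 0 < y -> 0 < z ->
  1 - 2 * x^2 + x^2 * y^2 = 0 -> 1 - 2 * y^2 + y^2 * z^2 = 0 -> y <> z ->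
  1 - 2 * ((x+y)/2)^2 + ((x+y)/2)^2 * ((y+z)/2)^2 = 0 -> False.
Proof.
  intros hx hy hz h1 h2 hyz h3.
  set (m0 := (x+y)/2) in *. set (m1 := (y+z)/2) in *.
  assert (hm0 : 0 < m0) by (unfold m0; lra).
  assert (e1 : y^2 = 2 - 1/x^2).
  { assert (x^2 <> 0) by nra. apply (Rmult_eq_reg_r (x^2)); [|auto]. field_simplify; try lra; try nra; auto. }
  assert (e2 : z^2 = 2 - 1/y^2).
  { assert (y^2 <> 0) by nra. apply (Rmult_eq_reg_r (y^2)); [|auto]. field_simplify; try lra; try nra; auto. }
  assert (e3 : m1^2 = 2 - 1/m0^2).
  { assert (m0^2 <> 0) by nra. apply (Rmult_eq_reg_r (m0^2)); [|auto]. field_simplify; try lra; try nra; auto. }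
  assert (a1 : m1^2 < (y^2 + z^2)/2).
  { unfold m1. assert (0 < (y - z)^2) by (assert (y - z <> 0) by lra; simpl; rewrite Rmult_1_r; apply Rsqr_pos_lt; auto). assert ((y^2+z^2)/2 - ((y+z)/2)^2 = (y-z)^2/4) by field. lra. }
  assert (a2 : 1/x^2 + 1/y^2 >= 2 * (1/m0^2)).
  { assert (0 <= (x - y)^2) by apply pow2_ge_0.
    assert (1/x^2 + 1/y^2 - 2 * (1/m0^2) = (x-y)^2 * (x^2 + 4*x*y + y^2) / (x^2*y^2*(x+y)^2)).
    { unfold m0. field. lra. }
    assert (0 <= (x-y)^2 * (x^2 + 4*x*y + y^2) / (x^2*y^2*(x+y)^2)).
    { apply Rle_mult_inv_pos; [|repeat apply Rmult_lt_0_compat; nra]. apply Rmult_le_pos; nra. }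
    lra. }
  lra.
Qed.

Lemma seq_distinct (t : nat -> R) :
  (forall k, 1 - 2 * t k + t k * t (S k) = 0) -> t 0%nat <> 1 ->
  (forall k, t k <> 0) /\ forall j k, j <> k -> t j <> t k.
Proof.
  intros Hr H0.
  assert (Hnz : forall k, t k <> 0) by (intros k Hk; specialize (Hr k); rewrite Hk in Hr; lra).
  assert (Hn1 : forall k, t k <> 1).
  { induction k; auto. intro H. specialize (Hr k). rewrite H in Hr. apply IHk; lra. }
  split; auto.
  assert (Hk : forall n, 1 / (t n - 1) = 1 / (t 0%nat - 1) + INR n).
  { induction n; [simpl; ring|]. rewrite S_INR, <- Rplus_assoc, <- IHn.
    pose proof (Hn1 (S n)) as HS. specialize (Hr n). specialize (Hn1 n). specialize (Hnz n).
    assert (E1 : t (S n) - 1 = (t n - 1) / t n).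
    { apply (Rmult_eq_reg_r (t n)); [|auto]. field_simplify; auto. lra. }
    rewrite E1. field. split; auto. lra. }
  intros j k Hjk E. apply Hjk. apply INR_eq.
  pose proof (Hk j); pose proof (Hk k). rewrite E in H. lra.
Qed.

From Stdlib Require Import Reals Lra Psatz FunctionalExtensionality.
From Coquelicot Require Import Coquelicot.
Open Scope R_scope.

Lemma rel a k : two_isometry (wshift a) -> 1 - 2 * tt a k + tt a k * tt a (S k) = 0.
Proof.
  intro H. pose proof (H (sv k 1) (l2_sv k 1)) as E.
  rewrite !T_sv, !norm2_sv, !Cmod_mult, Cmod_1 in E. unfold tt. rewrite <- E. ring.
Qed.

Lemma pos_fixed (A : op) : positive_op A -> (forall x, l2 x -> A (A x) = x) ->
  forall x, l2 x -> A x = x.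
Proof.
  intros [HA Hpos] H2 x Hx.
  assert (HAx : l2 (A x)) by (apply HA; auto).
  set (y := fun n => (A x n + (-1) * x n)%C).
  assert (Hy : l2 y) by (apply l2_comb; auto).
  assert (HAy : A y = fun n => (x n + (-1) * A x n)%C).
  { unfold y. destruct HA as [_ [Hl _]]. rewrite Hl by auto. rewrite H2 by auto. reflexivity. }
  destruct (Hpos y Hy) as [Hre _]. rewrite HAy in Hre.
  assert (E : Re (inner (fun n => (x n + -1 * A x n)%C) y) = - norm2 y).
  { unfold inner, norm2. cbn [Re fst]. rewrite <- Series_opp. apply Series_ext; intro n. unfold y.
    rewrite Cmod2_alt. destruct (x n) as [u v]; destruct (A x n) as [p q]. simpl. ring. }
  rewrite E in Hre. pose proof (norm2_ge0 y Hy).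
  assert (norm2 y = 0) by lra.
  apply functional_extensionality; intro n. pose proof (norm2_zero y Hy H0 n) as Z.
  unfold y in Z. apply (f_equal (fun w => w + x n)%C) in Z. ring_simplify in Z. rewrite Z. ring.
Qed.

Lemma BT_sv a k : bshift a (wshift a (sv k 1)) = sv k (RtoC (tt a k)).
Proof.
  apply functional_extensionality; intro n. rewrite BT. unfold sv.
  destruct (Nat.eq_dec n k); subst; ring.
Qed.

Lemma eig a (P : op) k : positive_op P ->
  (forall x, l2 x -> P (P x) = bshift a (wshift a x)) ->
  (forall j, j <> k -> tt a j <> tt a k) ->
  P (sv k 1) = sv k (RtoC (Cmod (a k))).
Proof.
  intros [HPb Hpos] HP2 Hd.
  set (y := P (sv k 1)).
  assert (Hy : l2 y) by (apply HPb, l2_sv).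
  assert (E4 : P y = sv k (RtoC (tt a k))).
  { unfold y. rewrite HP2 by apply l2_sv. apply BT_sv. }
  assert (E2 : forall n, (RtoC (tt a n) * y n)%C = (RtoC (tt a k) * y n)%C).
  { intro n. rewrite <- BT. rewrite <- HP2 by auto. rewrite E4, lin_sv by auto. reflexivity. }
  assert (Hz : forall n, n <> k -> y n = 0%C).
  { intros n Hn. specialize (E2 n). specialize (Hd n Hn).
    assert (Hne : RtoC (tt a n - tt a k) <> 0%C).
    { intro H. apply (f_equal Re) in H. simpl in H. apply Hd. lra. }
    assert (RtoC (tt a n - tt a k) * y n = 0)%C.
    { rewrite RtoC_minus. apply (f_equal (fun w => w - RtoC (tt a k) * y n)%C) in E2.
      ring_simplify in E2. rewrite <- E2. ring. }
    apply (f_equal (fun w => / RtoC (tt a n - tt a k) * w)%C) in H.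
    rewrite Cmult_assoc, Cinv_l in H by auto. rewrite Cmult_1_l, Cmult_0_r in H. auto. }
  assert (Ey : y = sv k (y k)).
  { apply functional_extensionality; intro n. unfold sv. destruct (Nat.eq_dec n k).
    subst; auto. apply Hz; auto. }
  destruct (Hpos (sv k 1) (l2_sv k 1)) as [Hre Him]. fold y in Hre, Him.
  rewrite inner_sv in Hre, Him.
  set (r := Re (y k)) in *.
  assert (Eyk : y k = RtoC r).
  { unfold r. destruct (y k) as [u v]. simpl in *. rewrite Him. reflexivity. }
  assert (E3 : P y = sv k (RtoC (r * r))).
  { assert (Ey2 : y = sv k (RtoC r)) by (rewrite <- Eyk; exact Ey).
    assert (Hpt : forall n, y n = sv k (RtoC r) n) by (intro; rewrite <- Ey2; auto).
    rewrite Ey2 at 1. rewrite lin_sv by auto. fold y.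
    apply functional_extensionality; intro n. rewrite Hpt. unfold sv.
    destruct (Nat.eq_dec n k); [rewrite RtoC_mult|]; ring. }
  rewrite E3 in E4. apply (f_equal (fun f => f k)) in E4. rewrite !sv_in in E4.
  apply (f_equal Re) in E4. simpl in E4. unfold tt in E4.
  assert (r = Cmod (a k)).
  { pose proof (Cmod_ge_0 (a k)). nra. }
  rewrite Ey, Eyk, H. reflexivity.
Qed.

Lemma Vsv a (P V : op) k s c : bounded_op P ->
  (forall x, l2 x -> wshift a x = V (P x)) ->
  P (sv k 1) = sv k (RtoC s) -> s <> 0 ->
  V (sv k c) = sv (S k) (a k * c / RtoC s)%C.
Proof.
  intros HP HTVP Hk Hs.
  assert (Hs' : RtoC s <> 0%C) by (intro H; apply (f_equal Re) in H; simpl in H; auto).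
  assert (HPc : P (sv k (c / RtoC s)%C) = sv k c).
  { rewrite lin_sv, Hk by auto. apply functional_extensionality; intro n. unfold sv.
    destruct (Nat.eq_dec n k); [field; auto| ring]. }
  rewrite <- HPc, <- HTVP by apply l2_sv. rewrite T_sv. f_equal. unfold Cdiv. ring.
Qed.

Lemma Msv a (P V : op) k s s' c : bounded_op P -> bounded_op V ->
  (forall x, l2 x -> wshift a x = V (P x)) ->
  P (sv k 1) = sv k (RtoC s) -> P (sv (S k) 1) = sv (S k) (RtoC s') -> s <> 0 ->
  mean_transform P V (sv k c) = sv (S k) (a k * c * (RtoC s + RtoC s') / (2 * RtoC s))%C.
Proof.
  intros HP HV HTVP Hk Hk1 Hs.
  assert (Hs' : RtoC s <> 0%C) by (intro H; apply (f_equal Re) in H; simpl in H; auto).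
  unfold mean_transform. rewrite (Vsv a P V k s c) by auto.
  rewrite (lin_sv P (S k)), Hk1 by auto.
  rewrite (lin_sv P k), Hk by auto.
  replace (fun n => (c * sv k (RtoC s) n)%C) with (sv k (c * RtoC s)%C)
    by (apply functional_extensionality; intro n; unfold sv; destruct (Nat.eq_dec n k); ring).
  rewrite (Vsv a P V k s) by auto.
  apply functional_extensionality; intro n. unfold sv.
  destruct (Nat.eq_dec n (S k)); [field; auto | ring].
Qed.

From Stdlib Require Import Reals Lra Psatz FunctionalExtensionality.
From Coquelicot Require Import Coquelicot.
Open Scope R_scope.

Lemma Cmod_mu (a : nat -> C) (k : nat) c s s' : s <> 0 -> 0 < s -> 0 < s' -> Cmod (a k) = s ->
  Cmod (a k * c * (RtoC s + RtoC s') / (2 * RtoC s))%C = Cmod c * ((s + s') / 2).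
Proof.
  intros H0 Hs Hs' Ha.
  rewrite <- RtoC_plus, Cmod_div, !Cmod_mult, Cmod_R, Cmod_R, Ha.
  - rewrite (Rabs_pos_eq (s+s')) by lra. rewrite ?(Cmod_R 2), ?(Cmod_R s).
    rewrite (Rabs_pos_eq 2), (Rabs_pos_eq s) by lra. field. auto.
  - apply Cmult_neq_0. intro H; apply (f_equal Re) in H; simpl in H; lra.
    intro H; apply (f_equal Re) in H; simpl in H; lra.
Qed.

Theorem mainTheorem14 (a : nat -> C) (P V Q : op) :
  bounded_seq a ->
  polar_decomposition (wshift a) P V ->
  is_sqrt P Q ->
  two_isometry (wshift a) ->
  two_isometry (mean_transform P V) ->
  isometry (wshift a) /\
  (forall x, l2 x ->
     wshift a x = aluthge Q V x /\ aluthge Q V x = mean_transform P V x).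
Proof.
  intros Ha [[HPpos HPmod] [[HVb _] [_ HTVP]]] [HQpos HQQ] HT2 HM2.
  assert (HP2 := HPmod (bshift a) (bshift_adjoint a Ha)).
  assert (Hrel : forall k, 1 - 2 * tt a k + tt a k * tt a (S k) = 0) by (intro; apply rel; auto).
  destruct (Req_dec (tt a 0%nat) 1) as [H1|H1].
  - assert (Hall : forall n, tt a n = 1).
    { induction n; auto. specialize (Hrel n). rewrite IHn in Hrel. lra. }
    assert (HPid : forall x, l2 x -> P x = x).
    { apply pos_fixed; auto. intros x Hx. rewrite HP2 by auto.
      apply functional_extensionality; intro n. rewrite BT, Hall. ring. }
    assert (HQid : forall x, l2 x -> Q x = x).
    { apply pos_fixed; auto. intros x Hx. rewrite HQQ by auto. apply HPid; auto. }
    assert (HVT : forall x, l2 x -> V x = wshift a x).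
    { intros x Hx. rewrite HTVP, HPid by auto. reflexivity. }
    split.
    + intros x Hx. unfold norm2. rewrite (Series_incr_1 _ (l2_T a x Ha Hx)).
      replace (Cmod (wshift a x 0%nat) ^ 2) with 0 by (simpl; rewrite Cmod_0; ring).
      rewrite Rplus_0_l. apply Series_ext; intro n. simpl wshift.
      rewrite Cmod_mult, Rpow_mult_distr. pose proof (Hall n) as E. unfold tt in E. rewrite E. ring.
    + intros x Hx. assert (HTx := l2_T a x Ha Hx). unfold aluthge.
      rewrite (HQid x Hx), (HVT x Hx), (HQid _ HTx). split; auto.
      unfold mean_transform. rewrite (HVT x Hx), (HPid _ HTx), (HPid x Hx), (HVT x Hx).
      apply functional_extensionality; intro n. field.
  - exfalso. destruct (seq_distinct (tt a) Hrel H1) as [Hnz Hd].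
    assert (Hs : forall k, 0 < Cmod (a k)).
    { intro k. pose proof (Cmod_ge_0 (a k)). specialize (Hnz k). unfold tt in Hnz.
      assert (Cmod (a k) <> 0) by (intro E; apply Hnz; rewrite E; ring). lra. }
    assert (Heig : forall k, P (sv k 1) = sv k (RtoC (Cmod (a k)))).
    { intro k. apply (eig a P k HPpos HP2). intros j Hj. apply Hd; auto. }
    set (s0 := Cmod (a 0%nat)). set (s1 := Cmod (a 1%nat)). set (s2 := Cmod (a 2%nat)).
    assert (Hs0 : 0 < s0) by apply Hs. assert (Hs1 : 0 < s1) by apply Hs.
    assert (Hs2 : 0 < s2) by apply Hs.
    destruct HPpos as [HPb _].
    pose proof (Msv a P V 0 s0 s1 1 HPb HVb HTVP (Heig 0%nat) (Heig 1%nat) ltac:(lra)) as M0.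
    set (mu0 := (a 0%nat * 1 * (RtoC s0 + RtoC s1) / (2 * RtoC s0))%C) in M0.
    pose proof (Msv a P V 1 s1 s2 mu0 HPb HVb HTVP (Heig 1%nat) (Heig 2%nat) ltac:(lra)) as M1.
    pose proof (HM2 (sv 0 1) (l2_sv 0 1)) as E.
    rewrite M0, M1, !norm2_sv in E.
    rewrite (Cmod_mu a 1 mu0 s1 s2) in E by (auto; lra).
    unfold mu0 in E. rewrite (Cmod_mu a 0 1 s0 s1) in E by (auto; lra).
    rewrite Cmod_1 in E.
    apply (final_ineq s0 s1 s2); auto.
    + pose proof (Hrel 0%nat) as R0. unfold tt in R0. fold s0 s1 in R0. exact R0.
    + pose proof (Hrel 1%nat) as R0. unfold tt in R0. fold s1 s2 in R0. exact R0.
    + intro E'. apply (Hd 1%nat 2%nat); [lia|]. unfold tt. fold s1 s2. rewrite E'. reflexivity.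
    + rewrite <- E. ring.
Qed.
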